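(* Let $n\geq 2$. The composite \[ \mathcal{M}_{0,n+1}/\Sigma_n\xrightarrow{\ \phi\ } C_n(\mathbb{C})/(\mathbb{C}\rtimes\mathbb{C}^* )\subseteq \frac{SP^n(\mathbb{C})-\Delta}{\mathbb{C}\rtimes\mathbb{C}^*}\xrightarrow{\ \psi\ }\mathbb{P}(n,n-1,\dots,2) \] is a topological embedding.
   Context: $\mathcal{M}_{0,n+1}$ is the moduli space of $n+1$ distinct labelled points on the Riemann sphere modulo biholomorphisms, identified (by sending the $0$-th point to $\infty$) with $F_n(\mathbb{C})/(\mathbb{C}\rtimes\mathbb{C}^* )$, where $F_n(\mathbb{C})$ is the ordered configuration space of $n$ points in $\mathbb{C}$ and $\mathbb{C}\rtimes\mathbb{C}^*$ acts by $z\mapsto\lambda z+\mu$; $\Sigma_n$ permutes the $n$ points. $C_n(\mathbb{C})$ is the unordered configuration space, $SP^n(\mathbb{C})$ the symmetric power, $\Delta$ its diagonal $\{\{z,\dots,z\}\}$. The map $\phi$ sends the class of $(z_1,\dots,z_n)$ to the class of $\{z_1,\dots,z_n\}$. The map $\psi$ sends the class of $\{z_1,\dots,z_n\}$ to $[a_0:\dots:a_{n-2}]$, where $a_k$ is the coefficient of $z^k$ in $\prod_i(z-z_i+B)$ with $B=(z_1+\dots+z_n)/n$. $\mathbb{P}(n,n-1,\dots,2)=(\mathbb{C}^{n-1}-\{0\})/\sim$ with $(a_0,\dots,a_{n-2})\sim(t^{n}a_0,t^{n-1}a_1,\dots,t^{2}a_{n-2})$, $t\in\mathbb{C}^*$.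 *)

(* Defs.v *)
From HB Require Import structures.
From mathcomp Require Import all_boot all_order all_algebra all_fingroup.
From mathcomp Require Import generic_quotient.
From mathcomp Require Import all_classical all_reals all_analysis.
From mathcomp Require Import complex.

Set Implicit Arguments.
Unset Strict Implicit.
Unset Printing Implicit Defensive.

Import Order.TTheory GRing.Theory Num.Theory.
Import numFieldTopology.Exports.

(* The topology of the complex numbers R[i]: the metric topology of |z|. *)
HB.instance Definition _ (R : realType) :=
  PseudoPointedMetric.copy R[i] (R[i])^o.
Local Open Scope classical_set_scope.
Local Open Scope ring_scope.
Local Open Scope complex_scope.
Local Open Scope quotient_scope.

Section Moduli.
Variables (R : realType) (n : nat).

Local Notation CC := (R[i]).

(* F_n(C): ordered configurations of n distinct points, with the subset
   topology inherited from the product topology on C^n = ('I_n -> C). *)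
Definition confset : set {ptws 'I_n -> CC} := [set x : {ptws 'I_n -> CC} | injective x].
Local Notation Fconf := (set_type confset).

(* The relation whose classes are the orbits of Sigma_n x (C semidirect C^* )
   acting on F_n(C): permutation of the points and z |-> l z + m. *)
Definition conf_rel (x y : 'I_n -> CC) : Prop :=
  exists (s : 'S_n) (l m : CC), l != 0 /\ forall i, y i = l * x (s i) + m.

Lemma conf_rel_refl x : conf_rel x x.
Proof. by exists 1%g, 1, 0; split => // i; rewrite perm1 mul1r addr0. Qed.

Lemma conf_rel_sym x y : conf_rel x y -> conf_rel y x.
Proof.
move=> [s [l [m [l0 e]]]]; exists s^-1%g, l^-1, (- (m / l)); split.
  by rewrite invr_eq0.
move=> i; rewrite e permKV mulrDr mulrA mulVf // mul1r.
by rewrite -addrA mulrC subrr addr0.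
Qed.

Lemma conf_rel_trans x y z : conf_rel x y -> conf_rel y z -> conf_rel x z.
Proof.
move=> [s [l [m [l0 e]]]] [s' [l' [m' [l0' e']]]].
exists (s' * s)%g, (l' * l), (l' * m + m'); split; first by rewrite mulf_neq0.
by move=> i; rewrite e' e permM mulrDr mulrA addrA.
Qed.

Definition conf_eqb (x y : Fconf) : bool := `[< conf_rel (val x) (val y) >].

Lemma conf_eqb_refl : reflexive conf_eqb.
Proof. by move=> x; apply/asboolP; exact: conf_rel_refl. Qed.
Lemma conf_eqb_sym : symmetric conf_eqb.
Proof.
by move=> x y; apply/idP/idP => /asboolP h; apply/asboolP; exact: conf_rel_sym.
Qed.
Lemma conf_eqb_trans : transitive conf_eqb.
Proof.
move=> y x z /asboolP h1 /asboolP h2; apply/asboolP; exact: conf_rel_trans h1 h2.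
Qed.

Definition conf_equiv : equiv_rel Fconf := EquivRel conf_eqb conf_eqb_refl conf_eqb_sym conf_eqb_trans.

(* M_{0,n+1}/Sigma_n = F_n(C)/(Sigma_n x (C semidirect C^* )), with the
   quotient topology. *)
Definition M0quot : topologicalType := @quotient_topology Fconf {eq_quot conf_equiv}.

(* C^{n-1} - {0}, indexed by the coefficients a_0, ..., a_{n-2}. *)
Definition nzset : set {ptws 'I_n.-1 -> CC} := [set a : {ptws 'I_n.-1 -> CC} | a <> (fun=> 0)].
Local Notation NZ := (set_type nzset).

Definition wrel (a b : 'I_n.-1 -> CC) : Prop :=
  exists t : CC, t != 0 /\ forall k : 'I_n.-1, b k = t ^+ (n - k) * a k.

Lemma wrel_refl a : wrel a a.
Proof. by exists 1; split => // k; rewrite expr1n mul1r. Qed.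

Lemma wrel_sym a b : wrel a b -> wrel b a.
Proof.
move=> [t [t0 e]]; exists t^-1; split; first by rewrite invr_eq0.
by move=> k; rewrite e mulrA exprVn mulVf ?mul1r // expf_neq0.
Qed.

Lemma wrel_trans a b c : wrel a b -> wrel b c -> wrel a c.
Proof.
move=> [t [t0 e]] [t' [t0' e']]; exists (t' * t); split.
  by rewrite mulf_neq0.
by move=> k; rewrite e' e mulrA exprMn.
Qed.

Definition weqb (a b : NZ) : bool := `[< wrel (val a) (val b) >].

Lemma weqb_refl : reflexive weqb.
Proof. by move=> x; apply/asboolP; exact: wrel_refl. Qed.
Lemma weqb_sym : symmetric weqb.
Proof.
by move=> x y; apply/idP/idP => /asboolP h; apply/asboolP; exact: wrel_sym.
Qed.
Lemma weqb_trans : transitive weqb.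
Proof.
move=> y x z /asboolP h1 /asboolP h2; apply/asboolP; exact: wrel_trans h1 h2.
Qed.

Definition wequiv : equiv_rel NZ := EquivRel weqb weqb_refl weqb_sym weqb_trans.

Definition Pw : topologicalType := @quotient_topology NZ {eq_quot wequiv}.

Definition barycenter (x : 'I_n -> CC) : CC := (\sum_i x i) / n%:R.
Definition coefvec (x : 'I_n -> CC) : 'I_n.-1 -> CC :=
  fun k => (\prod_(i < n) ('X - (x i)%:P + (barycenter x)%:P))`_k.

End Moduli.

(* Default point of C^{n-1} - {0} (needs n >= 2); only used to make the map
   total at the level of types, it is never reached on F_n(C). *)
Lemma ones_nz (R : realType) (n : nat) (hn : (2 <= n)%N) :
  @nzset R n (fun _ => 1).
Proof.
rewrite /nzset /= => /(congr1 (fun f => f (@Ordinal n.-1 0 _))).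
have h : (0 < n.-1)%N by case: n hn => [|[]].
by move/(_ h)/eqP; rewrite oner_eq0.
Qed.

Definition NZ_default (R : realType) (n : nat) (hn : (2 <= n)%N) : set_type (@nzset R n) :=
  SigSub (mem_set (@ones_nz R n hn)).

Definition psiphi (R : realType) (n : nat) (hn : (2 <= n)%N) :
    M0quot R n -> Pw R n :=
  fun q => \pi_(Pw R n) (insubd (@NZ_default R n hn) (coefvec (val (repr q)))).

Definition top_embedding {X Y : topologicalType} (f : X -> Y) : Prop :=
  [/\ continuous f, injective f &
      forall U : set X, open U ->
        exists V : set Y, open V /\ f @` U = f @` setT `&` V].

(* Main.v *)
Require Import Defs.
From HB Require Import structures.
From mathcomp Require Import all_boot all_order all_algebra all_fingroup.
From mathcomp Require Import generic_quotient.
From mathcomp Require Import all_classical all_reals all_analysis.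
From mathcomp Require Import complex.
From mathcomp Require Import ring lra zify.
Set Implicit Arguments.
Unset Strict Implicit.
Unset Printing Implicit Defensive.
Import Order.TTheory GRing.Theory Num.Theory.
Import numFieldTopology.Exports.
Local Open Scope classical_set_scope.
Local Open Scope ring_scope.
Local Open Scope complex_scope.
Local Open Scope quotient_scope.
Section Metric.
Variable R : realType.
Local Notation C := (R[i]).
Definition nc (z : C) : R := complex.Re `|z|.
Lemma ncE z : `|z| = (nc z)%:C.
Proof. by rewrite /nc RRe_real // normr_real. Qed.
Lemma nc_ge0 z : 0 <= nc z.
Proof. by have := normr_ge0 z; rewrite ncE lecR. Qed.
Lemma ncD x y : nc (x + y) <= nc x + nc y.
Proof. by have := ler_normD x y; rewrite !ncE -rmorphD lecR. Qed.
Lemma ncM x y : nc (x * y) = nc x * nc y.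
Proof. by apply: complexI; rewrite rmorphM /= -!ncE normrM. Qed.
Lemma ncX x k : nc (x ^+ k) = nc x ^+ k.
Proof. by apply: complexI; rewrite rmorphXn /= -!ncE normrX. Qed.
Lemma ncN x : nc (- x) = nc x.
Proof. by rewrite /nc normrN. Qed.
Lemma ncB x y : nc (x - y) = nc (y - x).
Proof. by rewrite -ncN opprB. Qed.
Lemma nc0 : nc 0 = 0.
Proof. by rewrite /nc normr0. Qed.
Lemma nc_eq0 x : (nc x == 0) = (x == 0).
Proof.
apply/eqP/eqP => h; last by rewrite h nc0.
by apply/eqP; rewrite -normr_eq0 ncE h.
Qed.
Lemma nc_gt0 x : x != 0 -> 0 < nc x.
Proof. by move=> h; rewrite lt_def nc_eq0 h nc_ge0. Qed.
Lemma nc_sum (I : Type) (r : seq I) (P : pred I) (F : I -> C) :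
  nc (\sum_(i <- r | P i) F i) <= \sum_(i <- r | P i) nc (F i).
Proof.
have := ler_norm_sum r F P.
have -> : \sum_(i <- r | P i) `|F i| = (\sum_(i <- r | P i) nc (F i))%:C.
  by rewrite rmorph_sum; apply: eq_bigr => i _; rewrite ncE.
by rewrite ncE lecR.
Qed.
Lemma nc_prod (I : Type) (r : seq I) (P : pred I) (F : I -> C) :
  nc (\prod_(i <- r | P i) F i) = \prod_(i <- r | P i) nc (F i).
Proof.
apply: complexI; rewrite -ncE normr_prod rmorph_prod /=.
by apply: eq_bigr => i _; rewrite ncE.
Qed.
Lemma nctri x y z : nc (x - z) <= nc (x - y) + nc (y - z).
Proof. by have := ncD (x - y) (y - z); rewrite addrA subrK. Qed.
End Metric.
Section Cont.
Variables (R : realType) (m : nat).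
Local Notation C := (R[i]).
Definition box (r : R) (x y : 'I_m -> C) := forall i, nc (y i - x i) < r.
Definition Cont (f : ('I_m -> C) -> C) := forall x (r : R), 0 < r ->
  exists2 rho : R, 0 < rho & forall y, box rho x y -> nc (f y - f x) < r.

Lemma box_le r r' x y : r <= r' -> box r x y -> box r' x y.
Proof. by move=> h b i; exact: lt_le_trans (b i) h. Qed.

Lemma cont_const c : Cont (fun=> c).
Proof. by move=> x r r0; exists 1 => // y _; rewrite subrr nc0. Qed.

Lemma cont_proj i : Cont (fun y => y i).
Proof. by move=> x r r0; exists r => // y; apply. Qed.

Lemma cont_add f g : Cont f -> Cont g -> Cont (fun y => f y + g y).
Proof.
move=> cf cg x r r0.
have r2 : 0 < r / 2 by rewrite divr_gt0.
have [r1 r10 h1] := cf x _ r2; have [r3 r30 h3] := cg x _ r2.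
exists (Num.min r1 r3); first by rewrite lt_min r10.
move=> y b.
have b1 : box r1 x y by apply: box_le b; rewrite ge_min lexx.
have b3 : box r3 x y by apply: box_le b; rewrite ge_min lexx orbT.
have -> : f y + g y - (f x + g x) = (f y - f x) + (g y - g x) by ring.
apply: le_lt_trans (ncD _ _) _.
have := h1 y b1; have := h3 y b3; lra.
Qed.
Lemma cont_mul f g : Cont f -> Cont g -> Cont (fun y => f y * g y).
Proof.
move=> cf cg x r r0.
have [a aE] : exists a, a = nc (f x) by eexists.
have [b bE] : exists b, b = nc (g x) by eexists.
have a0 : 0 <= a by rewrite aE nc_ge0. have b0 : 0 <= b by rewrite bE nc_ge0.
have [e1 e1d] : exists e1, e1 = r / (2 * (b + 1)) by eexists.
have e10 : 0 < e1 by rewrite e1d divr_gt0 // mulr_gt0 // ltr_wpDl.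
have e1E : e1 * (b + 1) = r / 2.
  rewrite e1d; field; rewrite ?lt0r_neq0 //; lra.
have [q qd] : exists q, q = r / (2 * (a + 1)) by eexists.
have q0 : 0 < q by rewrite qd divr_gt0 // mulr_gt0 // ltr_wpDl.
have qE : q * (a + 1) = r / 2.
  rewrite qd; field; rewrite ?lt0r_neq0 //; lra.
have e20 : 0 < Num.min 1 q by rewrite lt_min q0 ltr01.
have [r1 r10 h1] := cf x _ e10; have [r3 r30 h3] := cg x _ e20.
exists (Num.min r1 r3); first by rewrite lt_min r10.
move=> y bx.
have b1 : box r1 x y by apply: box_le bx; rewrite ge_min lexx.
have b3 : box r3 x y by apply: box_le bx; rewrite ge_min lexx orbT.
have nf := h1 y b1; have ng := h3 y b3.
rewrite lt_min in ng; case/andP: ng => ng1 ngq.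
have gy : nc (g y) <= b + nc (g y - g x).
  by rewrite bE; have := ncD (g x) (g y - g x); rewrite addrC subrK.
have -> : f y * g y - f x * g x = (f y - f x) * g y + f x * (g y - g x) by ring.
apply: le_lt_trans (ncD _ _) _; rewrite !ncM -aE.
have nf0 := nc_ge0 (f y - f x); have ng0 := nc_ge0 (g y - g x).
have gy0 := nc_ge0 (g y).
nra.
Qed.

Lemma cont_opp f : Cont f -> Cont (fun y => - f y).
Proof.
move=> cf x r r0; have [rho rho0 h] := cf x r r0; exists rho => // y b.
by rewrite -opprD ncN; exact: h.
Qed.

Lemma cont_sum N (F : 'I_N -> ('I_m -> C) -> C) :
  (forall j, Cont (F j)) -> Cont (fun y => \sum_(j < N) F j y).
Proof.
elim: N F => [|N IH] F cF.
  by under eq_fun do rewrite big_ord0; exact: cont_const.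
under eq_fun do rewrite big_ord_recr /=.
apply: cont_add; last exact: cF.
exact: (IH (fun j => F (widen_ord (leqnSn N) j))).
Qed.

Lemma cont_prod N (F : 'I_N -> ('I_m -> C) -> C) :
  (forall j, Cont (F j)) -> Cont (fun y => \prod_(j < N) F j y).
Proof.
elim: N F => [|N IH] F cF.
  by under eq_fun do rewrite big_ord0; exact: cont_const.
under eq_fun do rewrite big_ord_recr /=.
apply: cont_mul; last exact: cF.
exact: (IH (fun j => F (widen_ord (leqnSn N) j))).
Qed.

Lemma cont_coef_prod N (g : 'I_N -> ('I_m -> C) -> C) :
  (forall j, Cont (g j)) ->
  forall k, Cont (fun y => (\prod_(j < N) ('X - (g j y)%:P))`_k).
Proof.
elim: N g => [|N IH] g cg k.
  under eq_fun do rewrite big_ord0 coefC; exact: cont_const.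
under eq_fun do rewrite big_ord_recr /= mulrBr coefB coefMX coefMC.
apply: cont_add; last first.
  apply: cont_opp; apply: cont_mul; last exact: cg.
  exact: (IH (fun j => g (widen_ord (leqnSn N) j))).
case: k => [|k] /=; first exact: cont_const.
exact: (IH (fun j => g (widen_ord (leqnSn N) j))).
Qed.
End Cont.
Section Topo.
Variables (R : realType).
Local Notation C := (R[i]).

Lemma nbhsC (x : C) (A : set C) :
  nbhs x A <-> exists2 r : R, 0 < r & forall y, nc (y - x) < r -> A y.
Proof.
split.
  move/nbhs_ballP => [e /= e0 H]; exists (complex.Re e).
    by move: e0; rewrite ltcE => /andP[].
  have ee : e = (complex.Re e)%:C.
    move: e0; rewrite ltcE => /andP[/eqP hi _].
    by apply/eqP; rewrite eq_complex /= hi !eqxx.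
  by move=> y hy; apply: H; rewrite /ball /= ncE ncB ee ltcE /= eqxx hy.
move=> [r r0 H]; apply/nbhs_ballP; exists r%:C; first by rewrite /= ltcE /= eqxx.
move=> y; rewrite /ball /= ncE ltcE /= eqxx /= ncB; exact: H.
Qed.

Variable m : nat.
Local Notation X := {ptws 'I_m -> C}.

Lemma proj_cvg (x : X) (i : 'I_m) : (fun g : X => g i) @ nbhs x --> x i.
Proof.
have := @pointwise_cvgP (@initial_topology 'I_m R (fun=> 0)) R[i] (nbhs x) x _.
move=> h; have := proj1 (h _) (@cvg_id _ (nbhs x)); exact.
Qed.





Lemma nbhs_box (x : X) (r : R) : 0 < r -> nbhs x [set y | box r x y].
Proof.
move=> r0; rewrite /box.
apply: (@filter_forall X 'I_m (fun i y => nc (y i - x i) < r) (nbhs x) _) => i.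
have hS : nbhs (x i) [set z | nc (z - x i) < r].
  apply/(nbhsC (x i)). exists r => //.
have h := @proj_cvg x i _ hS.
exact: h.
Qed.
Lemma nbhs_ptws (x : X) (O : set X) :
  nbhs x O <-> exists2 r : R, 0 < r & forall y, box r x y -> O y.
Proof.
split; last first.
  move=> [r r0 h]. have hb := nbhs_box x r0.
  exact: (@filterS X (nbhs x) (@nbhs_filter X x) _ _ h hb).
move=> hO.
pose F := filter_from [set r : R | 0 < r] (fun r => [set y : X | box r x y]).
have FF : Filter F.
  apply: filter_from_filter; first by exists 1 => /=.
  move=> i j i0 j0; exists (Num.min i j); first by rewrite /= lt_min i0 j0.
  move=> y b; split.
    by apply: box_le b; rewrite ge_min lexx.
  by apply: box_le b; rewrite ge_min lexx orbT.
have hc := @pointwise_cvgP (@initial_topology 'I_m R (fun=> 0)) R[i] F x FF.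
have cF : F --> x.
  apply/(proj2 hc) => t A /nbhsC [r r0 h].
  by exists r => //= y b; apply: h; exact: b t.
have [r r0 hr] := cF O hO.
by exists r.
Qed.

Lemma nbhs_sub (A : set X) (x : set_type A) (W : set (set_type A)) :
  nbhs x W <-> exists2 r : R, 0 < r & forall y : set_type A, box r (\val x) (\val y) -> W y.
Proof.
rewrite nbhsE; split.
  move=> [B [oB Bx] BW].
  case: oB => O oO OB.
  have : nbhs (\val x : X) O.
    apply: open_nbhs_nbhs; split => //; by rewrite -OB in Bx.
  move/nbhs_ptws => [r r0 h]; exists r => // y b; apply: BW; rewrite -OB; exact: h.
move=> [r r0 h].
exists (\val @^-1` (interior [set z : X | box r (\val x) z])).
  split; first by exists (interior [set z : X | box r (\val x) z]) => //; exact: open_interior.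
  exact: nbhs_box.
by move=> y /interior_subset; apply: h.
Qed.
End Topo.
Section Poly.
Variables (R : realType) (m : nat).
Local Notation C := (R[i]).
Local Notation n := m.+2.

Definition cen (x : 'I_n -> C) i := x i - barycenter x.
Definition Pol (x : 'I_n -> C) := \prod_(i < n) ('X - (cen x i)%:P).

Lemma coefvecE x (k : 'I_n.-1) : coefvec x k = (Pol x)`_k.
Proof.
rewrite /coefvec; congr (_`_ _); rewrite /Pol.
have e i : 'X - (x i)%:P + (barycenter x)%:P = 'X - (cen x i)%:P.
  rewrite /cen.
  rewrite (polyCB (x i)); ring.
by under eq_bigr do rewrite e.
Qed.

Lemma natn_neq0 : (n%:R : C) != 0.
Proof. by rewrite pnatr_eq0. Qed.

Lemma sum_cen x : \sum_i cen x i = 0.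
Proof.
rewrite /cen sumrB sumr_const card_ord /barycenter.
by rewrite -[_ / _ *+ n]mulr_natr divfK ?subrr // natn_neq0.
Qed.

Lemma Pol_seq x : Pol x = \prod_(p <- map (cen x) (enum 'I_n)) ('X - p%:P).
Proof. by rewrite big_map enumT. Qed.

Lemma size_Pol x : size (Pol x) = n.+1.
Proof. by rewrite Pol_seq size_prod_XsubC size_map size_enum_ord. Qed.

Lemma Pol_n x : (Pol x)`_n = 1.
Proof.
have h : lead_coef (Pol x) = 1 by exact: lead_coef_prod_XsubC.
by move: h; rewrite /lead_coef size_Pol.
Qed.

Lemma Pol_n1 x : (Pol x)`_n.-1 = 0.
Proof.
have h : size (map (cen x) (enum 'I_n)) != 0%N by rewrite size_map size_enum_ord.
have := coefPn_prod_XsubC h; rewrite -Pol_seq size_map size_enum_ord => ->.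
by rewrite big_map enumT sum_cen oppr0.
Qed.

Lemma horner_Pol x w : (Pol x).[w] = \prod_i (w - cen x i).
Proof.
by rewrite /Pol horner_prod; apply: eq_bigr => i _; rewrite hornerXsubC.
Qed.

Lemma Pol_expand x w :
  (Pol x).[w] = w ^+ n + \sum_(k < m.+1) (Pol x)`_k * w ^+ k.
Proof.
rewrite horner_coef size_Pol big_ord_recr /= big_ord_recr /=.
have := Pol_n1 x; have := Pol_n x; rewrite /= => -> ->.
by rewrite mul0r addr0 mul1r addrC.
Qed.

Lemma coef_prod_scale N (c : 'I_N -> C) (t : C) k :
  t ^+ k * (\prod_(i < N) ('X - (t * c i)%:P))`_k =
  t ^+ N * (\prod_(i < N) ('X - (c i)%:P))`_k.
Proof.
elim: N c k => [|N IH] c k.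
  rewrite !big_ord0 !coefC; case: k => [|k] /=; first by rewrite !expr0.
  by rewrite !mulr0.
rewrite !big_ord_recr /= !mulrBr !coefB !coefMX !coefMC !mulrBr.
have IHc := IH (fun i => c (widen_ord (leqnSn N) i)).
case: k => [|k] /=.
  rewrite !mulr0 !sub0r expr0 mul1r.
  have := IHc 0%N; rewrite expr0 mul1r => ->.
  by rewrite exprS; ring.
have h1 := IHc k; have h2 := IHc k.+1.
rewrite !exprS in h2 *.
rewrite -mulrA h1.
have -> : t * t ^+ k * ((\prod_(i < N) ('X - (t * c (widen_ord (leqnSn N) i))%:P))`_k.+1 * (t * c ord_max))
  = t * c ord_max * (t * t ^+ k * (\prod_(i < N) ('X - (t * c (widen_ord (leqnSn N) i))%:P))`_k.+1) by ring.
rewrite h2; ring.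
Qed.
End Poly.
Section Inv.
Variables (R : realType) (m : nat).
Local Notation C := (R[i]).
Local Notation n := m.+2.

Lemma bary_conf (s : 'S_n) (l mm : C) (x : 'I_n -> C) :
  barycenter (fun i => l * x (s i) + mm) = l * barycenter x + mm.
Proof.
rewrite /barycenter big_split /= -mulr_sumr sumr_const card_ord.
rewrite -(@reindex_inj _ _ _ _ s xpredT x (@perm_inj _ s)) /=.
have h := @natn_neq0 R m.
rewrite -[mm *+ n]mulr_natr; field.
by move: h; rewrite -addn2 natrD addrC.
Qed.

Lemma cen_conf (s : 'S_n) (l mm : C) (x : 'I_n -> C) i :
  cen (fun i => l * x (s i) + mm) i = l * cen x (s i).
Proof. rewrite /cen bary_conf; ring. Qed.

Lemma Pol_conf (s : 'S_n) (l mm : C) (x : 'I_n -> C) :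
  Pol (fun i => l * x (s i) + mm) = \prod_(i < n) ('X - (l * cen x i)%:P).
Proof.
rewrite /Pol; under eq_bigr do rewrite cen_conf.
by rewrite -(@reindex_inj _ _ _ _ s xpredT (fun i => 'X - (l * cen x i)%:P) (@perm_inj _ s)).
Qed.

Lemma coef_scale_n (l : C) (c : 'I_n -> C) (k : nat) : l != 0 -> (k <= n)%N ->
  (\prod_(i < n) ('X - (l * c i)%:P))`_k = l ^+ (n - k) * (\prod_(i < n) ('X - (c i)%:P))`_k.
Proof.
move=> l0 kn; have h := coef_prod_scale c l k.
apply: (mulfI (expf_neq0 k l0)); rewrite h mulrA -exprD subnKC //.
Qed.

Lemma coefvec_conf (s : 'S_n) (l mm : C) (x : 'I_n -> C) (k : 'I_n.-1) : l != 0 ->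
  coefvec (fun i => l * x (s i) + mm) k = l ^+ (n - k) * coefvec x k.
Proof.
move=> l0; rewrite !coefvecE Pol_conf coef_scale_n //.
by apply: ltnW; apply: (leq_trans (ltn_ord k)).
Qed.

Lemma conf_rel_wrel (x y : 'I_n -> C) :
  conf_rel x y -> wrel (coefvec x) (coefvec y).
Proof.
move=> [s [l [mm [l0 e]]]]; exists l; split => // k.
have -> : y = (fun i => l * x (s i) + mm) by apply: funext => i; rewrite e.
exact: coefvec_conf.
Qed.

Lemma Pol_root (x : 'I_n -> C) i : (Pol x).[cen x i] = 0.
Proof. by rewrite horner_Pol (bigD1 i) //= subrr mul0r. Qed.

Lemma coefvec_nz (x : 'I_n -> C) : injective x -> coefvec x <> (fun=> 0).
Proof.
move=> ix h0.
have hc (i : 'I_n) : cen x i = 0.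
  have := Pol_root x i; rewrite Pol_expand.
  rewrite big1 ?addr0; last first.
    move=> k _; have := congr1 (fun f => f k) h0; rewrite /= coefvecE => ->.
    by rewrite mul0r.
  by move/eqP; rewrite expf_eq0 /= => /eqP.
have := hc ord0; have := hc (@Ordinal n 1 isT); rewrite /cen.
move=> /eqP; rewrite subr_eq0 => /eqP h1 /eqP; rewrite subr_eq0 -h1 => /eqP /ix.
by move/(congr1 val).
Qed.
End Inv.
Section Inj.
Variables (R : realType) (m : nat).
Local Notation C := (R[i]).
Local Notation n := m.+2.

Lemma cen_inj (y : 'I_n -> C) : injective y -> injective (cen y).
Proof. by move=> iy i j; rewrite /cen => /addIr /iy. Qed.

Lemma inj_core (x y : 'I_n -> C) : injective y ->
  (forall k : 'I_m.+1, coefvec x k = coefvec y k) ->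
  exists (s : 'S_n) (mm : C), forall i, y i = x (s i) + mm.
Proof.
move=> iy h.
have hP : Pol x = Pol y.
  apply/polyP => j.
  have [hj|hj] := ltnP j m.+1.
    by have := h (Ordinal hj); rewrite !coefvecE.
  have [jl|jg] := ltnP j n.+1.
    have [->|->] : j = m.+1 \/ j = m.+2 by lia.
      by rewrite (Pol_n1 x) (Pol_n1 y).
    by rewrite (Pol_n x) (Pol_n y).
  by rewrite !nth_default ?size_Pol.
have f_ex : forall i, exists j, cen x j = cen y i.
  move=> i; have := Pol_root y i; rewrite -hP horner_Pol => /eqP.
  move/prodf_eq0 => [j _]; rewrite subr_eq0 => /eqP hj.
  by exists j.
have [f hf] := choice f_ex.
have finj : injective f.
  by move=> i j e; apply: (cen_inj iy); rewrite -!hf e.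
exists (perm finj), (barycenter y - barycenter x) => i.
rewrite permE; have := hf i; rewrite /cen => e.
have -> : y i = (y i - barycenter y) + barycenter y by ring.
rewrite -e; ring.
Qed.
End Inj.
Section RC.
Variables (R : realType) (m : nat).
Local Notation C := (R[i]).
Local Notation n := m.+2.

Lemma minpos (I : finType) (f : I -> R) : (forall i, 0 < f i) ->
  exists2 e : R, 0 < e & forall i, e <= f i.
Proof.
move=> fp; pose S := \sum_i (f i)^-1.
have S0 : 0 <= S by apply: sumr_ge0 => i _; rewrite invr_ge0 ltW.
have S1 : 0 < 1 + S by lra.
exists (1 + S)^-1; first by rewrite invr_gt0.
move=> i; rewrite -[f i]invrK lef_pV2 ?posrE ?invr_gt0 //.
have : (f i)^-1 <= S.
  rewrite /S (bigD1 i) //= lerDl; apply: sumr_ge0 => j _.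
  by rewrite invr_ge0 ltW.
lra.
Qed.

Lemma root_cont (x : 'I_n -> C) (d : R) : injective x -> 0 < d ->
  exists2 eps : R, 0 < eps & forall z : 'I_n -> C,
    (forall k : 'I_m.+1, nc (coefvec z k - coefvec x k) < eps) ->
    exists (s : 'S_n) (mm : C), forall i, nc (z (s i) + mm - x i) < d.
Proof.
move=> ix d0.
have iw := cen_inj ix.
pose g (p : 'I_n * 'I_n) : R := if p.1 == p.2 then d else nc (cen x p.1 - cen x p.2) / 2.
have gp : forall p, 0 < g p.
  move=> [i j]; rewrite /g /=; case: eqP => // /eqP ij.
  rewrite divr_gt0 // nc_gt0 // subr_eq0; apply/negP => /eqP /iw /eqP.
  by rewrite (negbTE ij).
have [d' d'0 hd'] := minpos gp.
have d'd : d' <= d by have := hd' (ord0, ord0); rewrite /g eqxx.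
have d'sep : forall i j, i != j -> 2 * d' <= nc (cen x i - cen x j).
  move=> i j ij; have := hd' (i, j); rewrite /g /= (negbTE ij).
  have := nc_ge0 (cen x i - cen x j); lra.
pose M := 1 + \sum_i \sum_(k < m.+1) nc (cen x i) ^+ k.
have T0 : forall i, 0 <= \sum_(k < m.+1) nc (cen x i) ^+ k.
  by move=> i; apply: sumr_ge0 => k _; rewrite exprn_ge0 // nc_ge0.
have M0 : 0 < M.
  have : 0 <= \sum_i \sum_(k < m.+1) nc (cen x i) ^+ k.
    by apply: sumr_ge0 => i _; exact: T0.
  rewrite /M; lra.
have [eps epsE] : exists eps, eps = d' ^+ n / M by eexists.
have eps0 : 0 < eps by rewrite epsE divr_gt0 // exprn_gt0.
have epsM : eps * M = d' ^+ n by rewrite epsE divfK // lt0r_neq0.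
exists eps => // z hz.
have key : forall i, nc (\prod_j (cen x i - cen z j)) < d' ^+ n.
  move=> i; rewrite -horner_Pol.
  have -> : (Pol z).[cen x i] =
      \sum_(k < m.+1) ((Pol z)`_k - (Pol x)`_k) * (cen x i) ^+ k.
    have -> : (Pol z).[cen x i] = (Pol z).[cen x i] - (Pol x).[cen x i].
      by rewrite Pol_root subr0.
    rewrite !Pol_expand.
    rewrite [RHS](eq_bigr (fun k : 'I_m.+1 => (Pol z)`_k * cen x i ^+ k - (Pol x)`_k * cen x i ^+ k)); last by move=> k _; rewrite mulrBl.
    rewrite sumrB; ring.
  apply: le_lt_trans (nc_sum _ _ _) _.
  have h1 : \sum_(k < m.+1) nc (((Pol z)`_k - (Pol x)`_k) * cen x i ^+ k)
      <= eps * \sum_(k < m.+1) nc (cen x i) ^+ k.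
    rewrite mulr_sumr; apply: ler_sum => k _; rewrite ncM ncX.
    apply: ler_wpM2r; first by rewrite exprn_ge0 // nc_ge0.
    by apply: ltW; rewrite -!coefvecE; exact: hz k.
  have h2 : \sum_(k < m.+1) nc (cen x i) ^+ k <= M - 1.
    have -> : M - 1 = \sum_i \sum_(k < m.+1) nc (cen x i) ^+ k by rewrite /M; ring.
    rewrite (bigD1 i) //= lerDl.
    by apply: sumr_ge0 => j _; exact: T0.
  have h3 : eps * \sum_(k < m.+1) nc (cen x i) ^+ k <= eps * (M - 1).
    by apply: ler_wpM2l => //; exact: ltW.
  lra.
have near : forall i, exists j, nc (cen x i - cen z j) < d'.
  move=> i.
  have [/existsP [j hj]|/existsPn hall] := boolP [exists j, nc (cen x i - cen z j) < d'].
    by exists j.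
  exfalso; have := key i; rewrite nc_prod.
  have : \prod_(j < n) d' <= \prod_j nc (cen x i - cen z j).
    apply: ler_prod => j _; rewrite ltW //=.
    by have := hall j; rewrite -leNgt.
  rewrite prodr_const card_ord; lra.
have [f hf] := choice near.
have finj : injective f.
  move=> i j e; apply/eqP; apply/negPn/negP => ij.
  have := d'sep i j ij.
  have := nctri (cen x i) (cen z (f i)) (cen x j).
  have := hf i; have := hf j; rewrite e (ncB (cen z (f j))); lra.
exists (perm finj), (barycenter x - barycenter z) => i; rewrite permE.
have -> : z (f i) + (barycenter x - barycenter z) - x i = - (cen x i - cen z (f i)).
  by rewrite /cen; ring.
by rewrite ncN; apply: lt_le_trans (hf i) d'd.
Qed.
End RC.
Section Main.
Variables (R : realType) (m : nat) (hn : (2 <= m.+2)%N).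
Local Notation C := (R[i]).
Local Notation n := m.+2.
Local Notation Fc := (set_type (@confset R n)).
Local Notation NZt := (set_type (@nzset R n)).
Local Notation Mq := (M0quot R n).
Local Notation Pq := (Pw R n).

Lemma Fc_inj (x : Fc) : injective (\val x).
Proof. by have := set_valP x; rewrite /confset. Qed.

Definition mkF (x : 'I_n -> C) (h : injective x) : Fc :=
  SigSub (mem_set (h : confset x)).
Lemma mkF_val x h : \val (@mkF x h) = x.
Proof. by []. Qed.

Definition Gm (x : Fc) : NZt := insubd (@NZ_default R n hn) (coefvec (\val x)).
Lemma Gm_val x : \val (Gm x) = coefvec (\val x).
Proof.
rewrite /Gm val_insubd ifT //; apply/mem_set.
exact: (@coefvec_nz R m (\val x) (@Fc_inj x)).
Qed.

Lemma pi_M_eq (x y : Fc) : \pi_Mq x = \pi_Mq y <-> conf_rel (\val x) (\val y).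
Proof.
split.
  by move/eqquotP => /asboolP.
by move=> h; apply/eqquotP; apply/asboolP.
Qed.

Lemma pi_P_eq (a b : NZt) : \pi_Pq a = \pi_Pq b <-> wrel (\val a) (\val b).
Proof.
split.
  by move/eqquotP => /asboolP.
by move=> h; apply/eqquotP; apply/asboolP.
Qed.

Lemma psiphiE (q : Mq) : @psiphi R n hn q = \pi_Pq (Gm (repr q)).
Proof. by []. Qed.

Lemma psiphi_pi (x : Fc) : @psiphi R n hn (\pi_Mq x) = \pi_Pq (Gm x).
Proof.
rewrite psiphiE; apply/pi_P_eq; rewrite !Gm_val; apply: conf_rel_wrel.
by apply/pi_M_eq; rewrite reprK.
Qed.

Lemma cont_coefvec (k : 'I_m.+1) : Cont (fun z : 'I_n -> C => coefvec z k).
Proof.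
have hb : Cont (fun z : 'I_n -> C => barycenter z).
  exact: (@cont_mul R n (fun z => \sum_i z i) (fun=> (n%:R : C)^-1)
     (@cont_sum R n n (fun j z => z j) (fun j => @cont_proj R n j)) (@cont_const R n _)).
have hc : forall j, Cont (fun z : 'I_n -> C => cen z j).
  move=> j; exact: (@cont_add R n (fun z => z j) (fun z => - barycenter z)
     (@cont_proj R n j) (@cont_opp R n _ hb)).
have := @cont_coef_prod R n n (fun j z => cen z j) hc k.
have -> : (fun z : 'I_n -> C => coefvec z k) =
  (fun y => (\prod_(j < n) ('X - (cen y j)%:P))`_k).
  by apply: funext => z; rewrite coefvecE.
done.
Qed.

Lemma Gm_cont : continuous Gm.
Proof.
move=> x W /= /nbhs_sub [r r0 hW].
apply/nbhs_sub.
have ex : forall k : 'I_m.+1, exists rho : R, 0 < rho /\ forall y, box rho (\val x) y ->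
   nc (coefvec y k - coefvec (\val x) k) < r.
  move=> k; have [rho rho0 h] := @cont_coefvec k (\val x) r r0.
  by exists rho.
have [rh hrh] := choice ex.
have [rho rho0 hrho] := @minpos R _ rh (fun k => proj1 (hrh k)).
exists rho => // y b; apply: hW => k.
rewrite !Gm_val; apply: (proj2 (hrh k)).
by apply: box_le b.
Qed.

Lemma psiphi_cont : continuous (@psiphi R n hn).
Proof.
apply/quotient_continuous.
have -> : (@psiphi R n hn) \o \pi_Mq = \pi_Pq \o Gm.
  by apply: funext => x /=; rewrite psiphi_pi.
move=> x; apply: continuous_comp; first exact: Gm_cont.
exact: pi_continuous.
Qed.

Lemma psiphi_inj : injective (@psiphi R n hn).
Proof.
move=> q1 q2; rewrite !psiphiE => /pi_P_eq; rewrite !Gm_val.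
move=> [t [t0 ht]].
set x1 := \val (repr q1); set x2 := \val (repr q2).
have hk : forall k : 'I_m.+1,
    coefvec (fun i => t * x1 ((1 : 'S_n)%g i) + 0) k = coefvec x2 k.
  by move=> k; rewrite coefvec_conf // ht.
have [s [mm hs]] := @inj_core R m _ x2 (@Fc_inj (repr q2)) hk.
have : \pi_Mq (repr q1) = \pi_Mq (repr q2).
  apply/pi_M_eq; exists s, t, mm; split => // i.
  by rewrite -/x1 -/x2 hs perm1 addr0.
by rewrite !reprK.
Qed.

Lemma psiphi_open (U : set Mq) : open U ->
  exists V : set Pq, open V /\
    (@psiphi R n hn) @` U = (@psiphi R n hn) @` setT `&` V.
Proof.
move=> oU.
have oUo : open (\pi_Mq @^-1` U : set Fc) := oU.
pose S : set NZt := fun b => forall z : Fc,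
  wrel (coefvec (\val z)) (\val b) -> U (\pi_Mq z).
pose A := interior S.
pose V : set Pq := fun p => exists2 a, A a & \pi_Pq a = p.
exists V; split.
  change (open (\pi_Pq @^-1` V : set NZt)).
  rewrite openE => b [a Aa eab].
  move/pi_P_eq: eab => [t [t0 ht]].
  move: Aa; rewrite /A /interior /= => /nbhs_sub [r r0 hr].
  have [u ud] : exists u, u = t^-1 by eexists.
  have u0 : u != 0 by rewrite ud invr_eq0.
  have hut : forall j, u ^+ j * t ^+ j = 1.
    by move=> j; rewrite -exprMn ud mulVf // expr1n.
  have ha : forall k : 'I_m.+1, \val a k = u ^+ (n - k) * \val b k.
    by move=> k; rewrite (ht k) mulrA hut mul1r.
  pose f (k : 'I_m.+1) : R := r / 2 / (nc u ^+ (n - k) + 1).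
  have fp : forall k, 0 < f k.
    move=> k; rewrite /f !divr_gt0 //.
    by have := exprn_ge0 (n - k) (nc_ge0 u); lra.
  have [rho rho0 hrho] := minpos fp.
  rewrite /interior /=; apply/nbhs_sub; exists rho => // b' hb'.
  pose a'v := fun k : 'I_m.+1 => u ^+ (n - k) * \val b' k.
  have a'nz : @nzset R n a'v.
    move=> h0; have := set_valP b'; rewrite /nzset /=; apply.
    apply: funext => k; have := congr1 (fun g => g k) h0; rewrite /a'v /=.
    by move/eqP; rewrite mulf_eq0 expf_eq0 (negbTE u0) andbF /= => /eqP.
  pose a' : NZt := SigSub (mem_set a'nz).
  exists a'.
    rewrite /A /interior /=; apply/nbhs_sub; exists (r / 2); first by rewrite divr_gt0.
    move=> y hy; apply: hr => k.
    have hk : nc (a'v k - \val a k) < r / 2.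
      rewrite ha /a'v -mulrBr ncM ncX.
      have hb'k := hb' k; have fk := hrho k.
      have e1 : nc u ^+ (n - k) * f k <= r / 2.
        rewrite /f; move: (exprn_ge0 (n - k) (nc_ge0 u)); move: (nc u ^+ (n - k)) => c c0.
        have hf : c * (r / 2 / (c + 1)) + r / 2 / (c + 1) = r / 2.
          by field; rewrite ?lt0r_neq0 //; lra.
        have : 0 < r / 2 / (c + 1) by rewrite !divr_gt0 //; lra.
        lra.
      have := exprn_ge0 (n - k) (nc_ge0 u).
      have := nc_ge0 (\val b' k - \val b k).
      nra.
    have := nctri (\val y k) (a'v k) (\val a k).
    have := hy k; rewrite /=; lra.
  apply/pi_P_eq; exists t; split => // k.
  change (\val b' k = t ^+ (n - k) * (u ^+ (n - k) * \val b' k)).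
  by rewrite mulrA (mulrC (t ^+ _)) hut mul1r.
apply/seteqP; split.
  move=> p [q Uq <-]; split; first by exists q.
  exists (Gm (repr q)); last by rewrite psiphiE.
  have Uy : (\pi_Mq @^-1` U) (repr q) by rewrite /= reprK.
  have : nbhs (repr q) (\pi_Mq @^-1` U) by apply: open_nbhs_nbhs; split.
  move/nbhs_sub => [d d0 hd].
  have [eps eps0 heps] := @root_cont R m (\val (repr q)) d (@Fc_inj (repr q)) d0.
  rewrite /A /interior /=; apply/nbhs_sub; exists eps => // b' hb' z [t [t0 ht]].
  pose zt := fun i => t * \val z ((1 : 'S_n)%g i) + 0.
  have hzt : forall k : 'I_m.+1, nc (coefvec zt k - coefvec (\val (repr q)) k) < eps.
    by move=> k; rewrite coefvec_conf // -ht -Gm_val; exact: hb' k.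
  have [s [mm hs]] := heps zt hzt.
  pose z2 := fun i => t * \val z (s i) + mm.
  have iz2 : injective z2.
    move=> i j; rewrite /z2 => /addIr /(mulfI t0) /(@Fc_inj z).
    exact: perm_inj.
  have Uz2 : U (\pi_Mq (mkF iz2)).
    apply: hd => i; rewrite mkF_val.
    by have := hs i; rewrite /zt /z2 perm1 addr0.
  suff -> : \pi_Mq z = \pi_Mq (mkF iz2) by [].
  by apply/pi_M_eq; exists s, t, mm; split.
move=> p [[q _ <-] [a Aa ea]]; exists q => //.
have Sa : S a := interior_subset Aa.
have := Sa (repr q); rewrite reprK; apply.
move: ea; rewrite psiphiE => /pi_P_eq; rewrite Gm_val => h; exact: wrel_sym h.
Qed.
End Main.

Theorem mainTheorem4 (R : realType) (n : nat) (hn : (2 <= n)%N) :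
  top_embedding (@psiphi R n hn).
Proof.
case: n hn => [|[|m]] // hn.
split; [exact: psiphi_cont | exact: psiphi_inj | exact: psiphi_open].
Qed.
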